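(* Let $S$ be an infinite set and $\mathcal{F}\subseteq 2^S$ closed under finite unions. Let $\mathbf{A}=(A_1,\dots,A_k)$, $k>1$, be a classification problem. Then $\mathbf{A}\in\mathit{core}_k(\mathcal{F})$ if and only if $(A_i,A_j)\in\mathit{core}_2(\mathcal{F})$ for all $1\le i\ne j\le k$.
   Context: A classification problem is a vector $(A_1,\dots,A_k)$, $k\ge1$, of pairwise disjoint infinite subsets of $S$, of length $k$. For vectors $\mathbf{B}=(B_1,\dots,B_m)$, $\mathbf{Q}=(Q_1,\dots,Q_k)$, $\mathbf{B}\le\mathbf{Q}$ means $1\le m\le k$ and there is an injective $\sigma:\{1,\dots,m\}\to\{1,\dots,k\}$ with $B_i\subseteq Q_{\sigma(i)}$. An $\mathcal{F}$-partition is a vector of pairwise disjoint members of $\mathcal{F}$ whose union is $S$. $\mathit{class}_k(\mathcal{F})$: classification problems $\mathbf{A}$ of length $k$ with $\mathbf{A}\le\mathbf{Q}$ for some $\mathcal{F}$-partition $\mathbf{Q}$ of length $k$. For $k>1$, $\mathit{core}_k(\mathcal{F})$ is the set of classification problems $\mathbf{A}$ of length $k$ such that every classification problem $\mathbf{A}'\le\mathbf{A}$ of length $|\mathbf{A}'|>1$ satisfies $\mathbf{A}'\notin\mathit{class}_{|\mathbf{A}'|}(\mathcal{F})$. *)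

(* Defs.v *)
From mathcomp Require Import all_boot all_order.
From mathcomp Require Import boolp classical_sets cardinality.
Set Implicit Arguments. Unset Strict Implicit. Unset Printing Implicit Defensive.
Local Open Scope classical_set_scope.

(* A vector of length k of subsets of S is a map 'I_k -> set S. *)

Definition pairwise_disjoint (S : Type) (k : nat) (A : 'I_k -> set S) : Prop :=
  forall i j : 'I_k, i != j -> A i `&` A j = set0.

Definition classification_problem (S : Type) (k : nat) (A : 'I_k -> set S) : Prop :=
  (1 <= k)%N /\ pairwise_disjoint A /\ (forall i, infinite_set (A i)).

Definition vle (S : Type) (m k : nat) (B : 'I_m -> set S) (Q : 'I_k -> set S) : Prop :=
  (1 <= m)%N /\ (m <= k)%N /\
  exists sigma : 'I_m -> 'I_k, injective sigma /\ forall i, B i `<=` Q (sigma i).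

Definition F_partition (S : Type) (F : set (set S)) (k : nat) (Q : 'I_k -> set S) : Prop :=
  (forall i, F (Q i)) /\ pairwise_disjoint Q /\ \bigcup_(i in [set: 'I_k]) Q i = [set: S].

Definition class_k (S : Type) (F : set (set S)) (k : nat) (A : 'I_k -> set S) : Prop :=
  classification_problem A /\
  exists Q : 'I_k -> set S, F_partition F Q /\ vle A Q.

Definition core_k (S : Type) (F : set (set S)) (k : nat) (A : 'I_k -> set S) : Prop :=
  classification_problem A /\
  forall (m : nat) (A' : 'I_m -> set S),
    classification_problem A' -> vle A' A -> (1 < m)%N -> ~ class_k F A'.

Definition pair_vec (S : Type) (k : nat) (A : 'I_k -> set S) (i j : 'I_k) : 'I_2 -> set S :=
  fun t => if t == ord0 then A i else A j.

Definition closed_under_finite_unions (S : Type) (F : set (set S)) : Prop :=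
  forall X Y, F X -> F Y -> F (X `|` Y).

(* Main.v *)
Require Import Defs.
From mathcomp Require Import all_boot all_order.
From mathcomp Require Import boolp classical_sets cardinality.
Local Open Scope classical_set_scope.

Lemma I2_cases (t : 'I_2) : t = ord0 \/ t = @Ordinal 2 1 isT.
Proof.
case: t => [[|[|n]] H]; [left|right|by []]; exact: val_inj.
Qed.

Lemma CP_pair (S : Type) (k : nat) (A : 'I_k -> set S) (i j : 'I_k) :
  classification_problem A -> i != j -> classification_problem (pair_vec A i j).
Proof.
move=> [_ [dA iA]] ij; split; first by []; split.
- move=> t u; rewrite /pair_vec.
  case: (I2_cases t) => ->; case: (I2_cases u) => -> //= _.
    exact: dA.
  rewrite setIC; exact: dA.
- by move=> t; rewrite /pair_vec; case: (t == ord0).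
Qed.

Lemma union_seq (S : Type) (F : set (set S)) (I : eqType) (Q : I -> set S) (s : seq I) :
  closed_under_finite_unions F -> (forall i, F (Q i)) -> s != [::] ->
  F (fun x => exists l, l \in s /\ Q l x).
Proof.
move=> cF FQ; elim: s => [//|y s IH] _.
case: s IH => [|z s] IH.
  have -> : (fun x => exists l, l \in [:: y] /\ Q l x) = Q y.
    apply: funext => x; apply: propext; split.
      by move=> [l [/[!inE] /eqP -> ?]].
    by move=> ?; exists y; rewrite inE eqxx.
  exact: FQ.
have -> : (fun x => exists l, l \in [:: y, z & s] /\ Q l x) =
   Q y `|` (fun x => exists l, l \in z :: s /\ Q l x).
  apply: funext => x; apply: propext; split.
    move=> [l [/[!inE] /orP [/eqP ->|H] Hl]]; [by left|right].
    by exists l; rewrite inE.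
  move=> [H|[l [H Hl]]]; [exists y; by rewrite inE eqxx|].
  by exists l; rewrite inE H orbT.
by apply: cF => //; apply: IH.
Qed.

Lemma union_fin (S : Type) (F : set (set S)) (I : finType) (Q : I -> set S) (P : pred I) :
  closed_under_finite_unions F -> (forall i, F (Q i)) -> (exists l, P l) ->
  F (fun x => exists l, P l /\ Q l x).
Proof.
move=> cF FQ [l0 Pl0].
have -> : (fun x => exists l, P l /\ Q l x) =
  (fun x => exists l, l \in [seq l <- enum I | P l] /\ Q l x).
  apply: funext => x; apply: propext; split; move=> [l [H1 H2]]; exists l;
  by move: H1; rewrite mem_filter mem_enum ?andbT.
apply: union_seq => //.
apply/eqP => H; have : l0 \in [seq l <- enum I | P l] by rewrite mem_filter mem_enum andbT.
by rewrite H.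
Qed.

Theorem lemma3p4 (S : Type) (F : set (set S)) (k : nat) (A : 'I_k -> set S) :
  infinite_set [set: S] ->
  closed_under_finite_unions F ->
  (1 < k)%N ->
  classification_problem A ->
  (core_k F A <-> forall i j : 'I_k, i != j -> core_k F (pair_vec A i j)).
Proof.
move=> _ cF k1 CPA; split.
- move=> [_ H] i j ij; split; first exact: CP_pair.
  move=> m A' CPA' [h1 [h2 [s [sinj sub]]]] m1 cls.
  apply: (H m A' CPA' _ m1 cls).
  split; first by []; split; first exact: leq_trans h2 k1.
  exists (fun l => if s l == ord0 then i else j); split.
    move=> l1 l2; case: (I2_cases (s l1)) => e1; case: (I2_cases (s l2)) => e2;
      rewrite e1 e2 /=.
    + by move=> _; apply: sinj; rewrite e1 e2.
    + by move=> e; rewrite e eqxx in ij.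
    + by move=> e; rewrite e eqxx in ij.
    + by move=> _; apply: sinj; rewrite e1 e2.
  move=> l x /sub; rewrite /pair_vec; by case: (s l == ord0).
- move=> Hp; split; first by [].
  move=> m A' CPA' [h1 [h2 [s [sinj sub]]]] m1
    [_ [Q [[FQ [dQ cQ]] [_ [_ [t [tinj tsub]]]]]]].
  pose a := @Ordinal m 0 (ltnW m1).
  pose b := @Ordinal m 1 m1.
  have ab : a != b by [].
  have ne : s a != s b by apply: contra ab => /eqP/sinj ->.
  have [_ Hc] := Hp _ _ ne.
  refine (Hc 2 (pair_vec A' a b) (CP_pair _ _ _ _ _ CPA' ab) _ isT _).
    split; first by []; split; first by [].
    exists id; split; first by [].
    move=> u x; rewrite /pair_vec /=; case: (u == ord0); [exact: sub|exact: sub].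
  have tab : t a != t b by apply: contra ab => /eqP/tinj ->.
  split; first exact: CP_pair.
  exists (fun u : 'I_2 => if u == ord0 then Q (t a)
     else (fun x => exists l, l != t a /\ Q l x)).
  split; first split.
  + move=> u; case: (u == ord0); first exact: FQ.
    apply: (union_fin _ _ _ _ (fun l => l != t a)) => //.
    by exists (t b); rewrite eq_sym.
  + split.
    * move=> u v.
      have key : Q (t a) `&` (fun x => exists l, l != t a /\ Q l x) = set0.
        apply/seteqP; split => x //= [H1 [l [Hl H2]]].
        have : (Q (t a) `&` Q l) x by split.
        by rewrite (dQ (t a) l); [|rewrite eq_sym].
      case: (I2_cases u) => ->; case: (I2_cases v) => -> //= _.
      by rewrite setIC.
    * apply/seteqP; split => x //= _.
      have : [set: S] x by [].
      rewrite -cQ => -[l _ Hl].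
      case: (eqVneq l (t a)) => [el|nl].
        by exists ord0 => //=; rewrite -el.
      by exists (@Ordinal 2 1 isT) => //=; exists l.
  + split; first by []; split; first by [].
    exists id; split; first by [].
    move=> u x; rewrite /pair_vec /=.
    case: (u == ord0); first exact: tsub.
    move=> /tsub Hb; exists (t b); split => //; by rewrite eq_sym.
Qed.
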